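(* Let $\mathcal O,K,k,\nu,\pi$ be as in the context. Let $\alpha\in\mathcal O((X^{-1}))$ with $\mathrm{LC}(\alpha)\in\mathcal O^*$ and $\operatorname{ord}(\alpha)\le0$, and let $\gamma=\bar\alpha\in k((X^{-1}))$. Assume $\alpha\notin K(X)$ and $\gamma\notin k(X)$. Let $(p_n,q_n)$ ($n\ge0$) be the canonical convergents of $\alpha$ over $K$ and $(u_m,v_m)$ ($m\ge0$) those of $\gamma$ over $k$. Then for every $n\ge0$, the pair $(\pi^{-\nu(q_n)}p_n,\pi^{-\nu(q_n)}q_n)$ lies in $\mathcal O[X]^2$, and its reduction $(\tilde p_n,\tilde q_n)\in k[X]^2$ satisfies $\tilde q_n\ne0$ and $\operatorname{ord}(\tilde p_n-\gamma\tilde q_n)>\deg\tilde q_n$. Moreover there are a unique $\lambda(n)\in\mathbb N_0$ and some $h_n\in k[X]\setminus\{0\}$ with $(\tilde p_n,\tilde q_n)=h_n\cdot(u_{\lambda(n)},v_{\lambda(n)})$. The map $\lambda:\mathbb N_0\to\mathbb N_0$ is non-decreasing and surjective, and if $n=\min\lambda^{-1}(m)$ then $\deg v_m=\deg q_n$.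
   Context: $\mathcal O$ is a discrete valuation ring with fraction field $K$, uniformiser $\pi$, valuation $\nu$ with $\nu(\pi)=1$, residue field $k$ of characteristic $\ne2$; bars denote coefficientwise reduction modulo the maximal ideal. For a polynomial or Laurent series $u=\sum u_nX^n$ over $K$, $\nu(u)=\inf_n\nu(u_n)$ (Gauss valuation). $F((X^{-1}))$ is the field of Laurent series $\sum_{n\le N}u_nX^n$ with $\operatorname{ord}(\sum_{n\le N}u_nX^n)=-N$ if $u_N\ne0$, and $\mathrm{LC}$ denotes the leading coefficient; $\mathcal O((X^{-1}))$ consists of those with all coefficients in $\mathcal O$. $\lfloor\alpha\rfloor$ is the unique polynomial with $\operatorname{ord}(\alpha-\lfloor\alpha\rfloor)>0$. Continued fraction: $\alpha_0=\alpha$, $\alpha_{n+1}=1/(\alpha_n-\lfloor\alpha_n\rfloor)$, partial quotients $a_n=\lfloor\alpha_n\rfloor$; canonical convergents $p_{-1}=1,q_{-1}=0,p_0=a_0,q_0=1$, $p_n=a_np_{n-1}+p_{n-2}$, $q_n=a_nq_{n-1}+q_{n-2}$. *)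

(* Defs.v *)
From HB Require Import structures.
From mathcomp Require Import all_boot all_order all_algebra.
Set Implicit Arguments. Unset Strict Implicit. Unset Printing Implicit Defensive.
Import Order.TTheory GRing.Theory Num.Theory.
Local Open Scope ring_scope.

(* Discrete valuation data: K is the fraction field, val the discrete  *)
(* valuation (meaningful on nonzero elements), upi a uniformiser,      *)
(* O = {0} U {x | val x >= 0}, red : O -> k the residue map (a         *)
(* surjective ring morphism on O whose kernel is the maximal ideal).   *)
Record dvr (K k : fieldType) := DVR {
  val : K -> int;
  upi : K;
  red : K -> k;
  valM : forall x y, x != 0 -> y != 0 -> val (x * y) = val x + val y;
  valD : forall x y, x != 0 -> y != 0 -> x + y != 0 ->
           Num.min (val x) (val y) <= val (x + y);
  upi_neq0 : upi != 0;
  val_upi : val upi = 1;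
  redD : forall x y, ((x == 0) || (0 <= val x)) -> ((y == 0) || (0 <= val y)) ->
           red (x + y) = red x + red y;
  redM : forall x y, ((x == 0) || (0 <= val x)) -> ((y == 0) || (0 <= val y)) ->
           red (x * y) = red x * red y;
  red1 : red 1 = 1;
  red_eq0 : forall x, ((x == 0) || (0 <= val x)) ->
           (red x == 0) = ((x == 0) || (0 < val x));
  red_surj : forall c : k, exists x, ((x == 0) || (0 <= val x)) /\ red x = c
}.

Section DVRdefs.
Variables (K k : fieldType) (D : dvr K k).
Definition inO (x : K) : bool := (x == 0) || (0 <= val D x).
Definition unitO (x : K) : bool := (x != 0) && (val D x == 0).
Definition gaussv (p : {poly K}) : int :=
  \big[Num.min/val D (lead_coef p)]_(c <- (p : seq K) | c != 0) val D c.
End DVRdefs.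

(* Laurent series in X^{-1}: LSer N c represents sum_{i>=0} c i X^(N-i) *)
Record lser (F : Type) := LSer { ltop : int; lcf : nat -> F }.

Section Laurent.
Variable F : nzRingType.

Definition lcoef (s : lser F) (d : int) : F :=
  if d <= ltop s then lcf s (absz (ltop s - d)) else 0.

Definition lmk (M : int) (f : int -> F) : lser F := LSer M (fun i => f (M - i%:Z)).

Definition lpoly (p : {poly F}) : lser F :=
  lmk (size p)%:Z (fun d => if 0 <= d then p`_(absz d) else 0).

Definition lone : lser F := lpoly 1.

Definition lsub (s t : lser F) : lser F :=
  lmk (Num.max (ltop s) (ltop t)) (fun d => lcoef s d - lcoef t d).

Definition lmul (s t : lser F) : lser F :=
  LSer (ltop s + ltop t)
       (fun n => \sum_(i < n.+1) lcf s i * lcf t (n - i)%N).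

Definition leqs (s t : lser F) : Prop := forall d, lcoef s d = lcoef t d.

Definition lfloor (s : lser F) : {poly F} :=
  \poly_(i < (absz (ltop s)).+1) lcoef s i%:Z.

(* ord s > m  (ord 0 = +oo) *)
Definition ord_gt (s : lser F) (m : int) : Prop :=
  forall d : int, - m <= d -> lcoef s d = 0.

(* N is the leading degree of s, i.e. s <> 0, ord s = -N, LC s = lcoef s N *)
Definition is_lead (s : lser F) (N : int) : Prop :=
  lcoef s N != 0 /\ forall d, N < d -> lcoef s d = 0.

Definition is_rat_ls (s : lser F) : Prop :=
  exists P Q : {poly F}, Q != 0 /\ leqs (lmul (lpoly Q) s) (lpoly P).

(* canonical convergents: cfpq a n = ((p_{n-1}, q_{n-1}), (p_n, q_n)) *)
Fixpoint cfpq (a : nat -> {poly F}) (n : nat) :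
    ({poly F} * {poly F}) * ({poly F} * {poly F}) :=
  match n with
  | 0 => ((1, 0), (a 0%N, 1))
  | n'.+1 => let: ((p1, q1), (p0, q0)) := cfpq a n' in
             ((p0, q0), (a n * p0 + p1, a n * q0 + q1))
  end.
Definition cfp a n := (cfpq a n).2.1.
Definition cfq a n := (cfpq a n).2.2.
End Laurent.

Definition lmap (F G : Type) (f : F -> G) (s : lser F) : lser G :=
  LSer (ltop s) (fun i => f (lcf s i)).

Definition is_cf_seq (F : fieldType) (al : lser F) (als : nat -> lser F) : Prop :=
  leqs (als 0%N) al /\
  forall n, leqs (lmul (als n.+1) (lsub (als n) (lpoly (lfloor (als n))))) (lone F).

(* Main.v *)
Require Import Defs.
From HB Require Import structures.
From mathcomp Require Import all_boot all_order all_algebra.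
From mathcomp Require Import zify.
From Stdlib Require Import Setoid Morphisms Ring Classical.
Set Implicit Arguments. Unset Strict Implicit. Unset Printing Implicit Defensive.
Import Order.TTheory GRing.Theory Num.Theory.
Local Open Scope ring_scope.


Section IS.
Variable F : fieldType.
Definition isum (g : int -> F) (A : int) (N : nat) := \sum_(i < N) g (A - i%:Z).

Lemma isum_split g A k N : isum g A (k + N) = isum g A k + isum g (A - k%:Z) N.
Proof.
rewrite /isum big_split_ord /=; congr (_ + _); apply: eq_bigr => i _.
by rewrite PoszD opprD addrA.
Qed.

Lemma isum0 g A N : (forall i : nat, (i < N)%N -> g (A - i%:Z) = 0) -> isum g A N = 0.
Proof. by move=> h; rewrite /isum big1 // => i _; apply: h. Qed.

Definition vanish_out (g : int -> F) (A : int) (N : nat) :=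
  forall j, (j <= A - N%:Z) \/ (A < j) -> g j = 0.

Lemma isum_widen g A N A' N' : vanish_out g A N -> A <= A' -> A' - N'%:Z <= A - N%:Z ->
  isum g A' N' = isum g A N.
Proof.
move=> hv hA hN.
pose k := absz (A' - A).
have kE : k%:Z = A' - A by rewrite /k; lia.
pose r := (N' - (k + N))%N.
have -> : N' = (k + (N + r))%N by rewrite /r; lia.
rewrite isum_split.
have -> : A' - k%:Z = A by rewrite kE; lia.
rewrite isum_split.
rewrite [isum g (A - _) r]isum0; last first.
  move=> i hi; apply: hv; left; lia.
rewrite [isum g A' k]isum0 ?add0r ?addr0 //.
move=> i hi; apply: hv; right; lia.
Qed.

Lemma isum_eq g A N A' N' : vanish_out g A N -> vanish_out g A' N' ->
  isum g A' N' = isum g A N.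
Proof.
move=> h1 h2.
pose B : int := Num.max A A'.
pose m0 : int := Num.min (A - N%:Z) (A' - N'%:Z).
pose M := absz (B - m0).
rewrite -(@isum_widen g A N B M) // -?(@isum_widen g A' N' B M) //; rewrite /M /B /m0; lia.
Qed.
Implicit Types (s t u : lser F) (d A : int).
Lemma lcoef_lmk M (f : int -> F) d : lcoef (lmk M f) d = if d <= M then f d else 0.
Proof.
rewrite /lcoef /lmk /=; case: ifP => // h.
congr f. rewrite gez0_abs ?subr_ge0 //. by rewrite opprB addrC subrK.
Qed.

Lemma lcoef_top s (i : nat) : lcoef s (ltop s - i%:Z) = lcf s i.
Proof.
rewrite /lcoef lerBlDr lerDl /=. by rewrite opprB addrC subrK absz_nat.
Qed.

Lemma lcoef_gt s d : ltop s < d -> lcoef s d = 0.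
Proof. by rewrite /lcoef ltNge => /negbTE ->. Qed.

Definition cg s t d := fun j => lcoef s j * lcoef t (d - j).

Lemma lmul_isum0 s t d :
  let n0 := if d <= ltop s + ltop t then (absz (ltop s + ltop t - d)%R).+1 else 0%N in
  lcoef (lmul s t) d = isum (cg s t d) (ltop s) n0 /\ vanish_out (cg s t d) (ltop s) n0.
Proof.
move=> n0; split.
  rewrite /n0 /lcoef /=; case: ifP => hd; last first.
    by rewrite /isum big_ord0.
  rewrite /isum; apply: eq_bigr => i _.
  rewrite /cg -/(lcoef s _) lcoef_top.
  set n := absz _.
  have hi : (i < n.+1)%N := ltn_ord i.
  have -> : d - (ltop s - (nat_of_ord i)%:Z) = ltop t - (n - i)%N%:Z.
    rewrite /n; lia.
  by rewrite lcoef_top.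
move=> j; rewrite /n0 /cg; case: ifP => hd [hj|hj].
- rewrite (@lcoef_gt t) ?mulr0 //; lia.
- by rewrite lcoef_gt ?mul0r.
- rewrite (@lcoef_gt t) ?mulr0 //; lia.
- by rewrite lcoef_gt ?mul0r.
Qed.

Lemma lmul_win s t d A N : vanish_out (cg s t d) A N ->
  lcoef (lmul s t) d = isum (cg s t d) A N.
Proof.
move=> hv; have [-> h0] := lmul_isum0 s t d.
exact: isum_eq.
Qed.

Lemma lmul_win' s t d A N : ltop s <= A -> A - N%:Z < d - ltop t ->
  lcoef (lmul s t) d = isum (cg s t d) A N.
Proof.
move=> h1 h2; apply: lmul_win => j [hj|hj]; rewrite /cg.
  rewrite (@lcoef_gt t) ?mulr0 //; lia.
by rewrite lcoef_gt ?mul0r //; lia.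
Qed.

Definition lz : lser F := LSer 0 (fun _ => 0).
Definition ladd s t := lmk (Num.max (ltop s) (ltop t)) (fun d => lcoef s d + lcoef t d).
Definition lopp s := LSer (ltop s) (fun i => - lcf s i).

Lemma lcoef_lz d : lcoef lz d = 0.
Proof. by rewrite /lcoef; case: ifP. Qed.

Lemma lcoef_ladd s t d : lcoef (ladd s t) d = lcoef s d + lcoef t d.
Proof.
rewrite /ladd lcoef_lmk; case: ifP => // h.
rewrite !lcoef_gt ?addr0 //; lia.
Qed.

Lemma lcoef_lsub s t d : lcoef (lsub s t) d = lcoef s d - lcoef t d.
Proof.
rewrite /lsub lcoef_lmk; case: ifP => // h.
move: h; rewrite le_max => /norP [h1 h2]. by rewrite !lcoef_gt ?subr0 // ltNge.
Qed.

Lemma lcoef_lopp s d : lcoef (lopp s) d = - lcoef s d.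
Proof. by rewrite /lcoef /=; case: ifP; rewrite ?oppr0. Qed.

Lemma lcoef_lpoly (p : {poly F}) d : lcoef (lpoly p) d = if (0:int) <= d then p`_(absz d) else 0.
Proof.
rewrite /lpoly lcoef_lmk; case: ifP => // h.
case: ifP => // h0; rewrite nth_default //.
have : ~~ (d <= (size p)%:Z) by rewrite h.
move: (size p) => n; lia.
Qed.

Lemma lcoef_lone d : lcoef (lone F) d = (d == 0)%:R.
Proof.
rewrite /lone lcoef_lpoly coefC; case: (d =P 0) => [->|hd] //.
case: ifP => // h; have -> : (absz d == 0%N) = false by apply/negP => /eqP; lia.
done.
Qed.

Definition bigM s t d := (absz (ltop s + ltop t - d)%R).+1.

Lemma lmul_std s t d : lcoef (lmul s t) d = isum (cg s t d) (ltop s) (bigM s t d).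
Proof. apply: lmul_win'; rewrite /bigM //; lia. Qed.

Lemma leqs_refl s : leqs s s. Proof. by []. Qed.
Lemma leqs_sym s t : leqs s t -> leqs t s. Proof. by move=> h d; rewrite h. Qed.
Lemma leqs_trans s t u : leqs s t -> leqs t u -> leqs s u.
Proof. by move=> h1 h2 d; rewrite h1 h2. Qed.

Lemma ladd0 s : leqs (ladd lz s) s.
Proof. by move=> d; rewrite lcoef_ladd lcoef_lz add0r. Qed.
Lemma laddC s t : leqs (ladd s t) (ladd t s).
Proof. by move=> d; rewrite !lcoef_ladd addrC. Qed.
Lemma laddA s t u : leqs (ladd s (ladd t u)) (ladd (ladd s t) u).
Proof. by move=> d; rewrite !lcoef_ladd addrA. Qed.
Lemma lsubE s t : leqs (lsub s t) (ladd s (lopp t)).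
Proof. by move=> d; rewrite lcoef_ladd lcoef_lsub lcoef_lopp. Qed.
Lemma laddN s : leqs (ladd s (lopp s)) lz.
Proof. by move=> d; rewrite lcoef_ladd lcoef_lopp lcoef_lz subrr. Qed.

Lemma lmul1 s : leqs (lmul (lone F) s) s.
Proof.
move=> d; rewrite (@lmul_win _ _ _ 0 1).
  by rewrite /isum big_ord1 /cg /= subr0 lcoef_lone eqxx mul1r subr0.
move=> j hj; rewrite /cg lcoef_lone; case: (j =P 0) => [hj0|]; last by rewrite mul0r.
by move: hj; rewrite hj0 => -[]; lia.
Qed.

Lemma lmulC s t : leqs (lmul s t) (lmul t s).
Proof.
move=> d; set N := bigM s t d.
rewrite (@lmul_win' s t d (ltop s) N) //; last by rewrite /N /bigM; lia.
rewrite (@lmul_win' t s d (d - ltop s + N%:Z - 1) N); last 2 first.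
- rewrite /N /bigM; lia.
- lia.
rewrite /isum (reindex_inj rev_ord_inj) /=; apply: eq_bigr => i _.
rewrite /cg mulrC; congr (lcoef _ _ * lcoef _ _).
- have hi := ltn_ord i; lia.
- have hi := ltn_ord i; lia.
Qed.

Lemma lmulA s t u : leqs (lmul s (lmul t u)) (lmul (lmul s t) u).
Proof.
move=> d; set M := (absz (ltop s + ltop t + ltop u - d)%R).+1.
rewrite (@lmul_win' (lmul s t) u d (ltop s + ltop t) M) //; last by rewrite /M; lia.
rewrite (@lmul_win' s (lmul t u) d (ltop s) M) //; last by rewrite /M /=; lia.
rewrite /isum /cg.
have e1 : forall i : 'I_M, lcoef (lmul s t) (ltop s + ltop t - i%:Z) =
    \sum_(j < M) lcoef s (ltop s - j%:Z) * lcoef t (ltop t - i%:Z + j%:Z).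
  move=> i; rewrite (@lmul_win' s t _ (ltop s) M) //; last first.
    have := ltn_ord i; lia.
  rewrite /isum /cg; apply: eq_bigr => j _; congr (_ * lcoef _ _); lia.
have e2 : forall j : 'I_M, lcoef (lmul t u) (d - (ltop s - j%:Z)) =
    \sum_(i < M) lcoef t (ltop t - i%:Z + j%:Z) * lcoef u (d - (ltop s + ltop t - i%:Z)).
  move=> j; rewrite (@lmul_win' t u _ (ltop t + j%:Z) M) //; last first.
    - rewrite /M; lia.
    - lia.
  rewrite /isum /cg; apply: eq_bigr => i _; congr (lcoef _ _ * lcoef _ _); lia.
under [RHS]eq_bigr do rewrite e1 mulr_suml.
under [LHS]eq_bigr do rewrite e2 mulr_sumr.
rewrite exchange_big /=; apply: eq_bigr => j _; apply: eq_bigr => i _.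
by rewrite mulrA.
Qed.

Lemma lmulDl s t u : leqs (lmul (ladd s t) u) (ladd (lmul s u) (lmul t u)).
Proof.
move=> d; rewrite lcoef_ladd.
set A : int := Num.max (ltop s) (ltop t).
set M := (absz (A + ltop u - d)%R).+1.
rewrite (@lmul_win' (ladd s t) u d A M) //; last by rewrite /M; lia.
rewrite (@lmul_win' s u d A M) ?(@lmul_win' t u d A M); try (rewrite /M /A; lia).
rewrite /isum -big_split /=; apply: eq_bigr => i _.
by rewrite /cg lcoef_ladd mulrDl.
Qed.

Lemma ladd_ext s s' t t' : leqs s s' -> leqs t t' -> leqs (ladd s t) (ladd s' t').
Proof. by move=> h1 h2 d; rewrite !lcoef_ladd h1 h2. Qed.
Lemma lopp_ext s s' : leqs s s' -> leqs (lopp s) (lopp s').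
Proof. by move=> h d; rewrite !lcoef_lopp h. Qed.
Lemma lsub_ext s s' t t' : leqs s s' -> leqs t t' -> leqs (lsub s t) (lsub s' t').
Proof. by move=> h1 h2 d; rewrite !lcoef_lsub h1 h2. Qed.
Lemma lmul_ext s s' t t' : leqs s s' -> leqs t t' -> leqs (lmul s t) (lmul s' t').
Proof.
move=> h1 h2 d.
set A : int := Num.max (ltop s) (ltop s').
set B : int := Num.max (ltop t) (ltop t').
set M := (absz (A + B - d)%R).+1.
rewrite (@lmul_win' s t d A M) ?(@lmul_win' s' t' d A M); try (rewrite /M /A /B; lia).
by rewrite /isum; apply: eq_bigr => i _; rewrite /cg h1 h2.
Qed.


Lemma lring_theory : @ring_theory (lser (F : nzRingType)) lz (lone F) ladd (@lmul F) (@lsub F) lopp (@leqs F).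
Proof.
split.
- exact: ladd0.
- exact: laddC.
- exact: laddA.
- exact: lmul1.
- exact: lmulC.
- exact: lmulA.
- exact: lmulDl.
- exact: lsubE.
- exact: laddN.
Qed.

Lemma leqs_setoid : Setoid_Theory (lser (F : nzRingType)) (@leqs F).
Proof. split; [exact: leqs_refl | exact: leqs_sym | exact: leqs_trans]. Qed.

Lemma lring_ext : ring_eq_ext ladd (@lmul F) lopp (@leqs F).
Proof. split; [move=> ? ? h1 ? ? h2; exact: ladd_ext | move=> ? ? h1 ? ? h2; exact: lmul_ext | move=> ? ? h1; exact: lopp_ext]. Qed.

Add Ring lring : lring_theory (setoid leqs_setoid lring_ext).

#[global] Instance leqs_equiv : Equivalence (@leqs F).
Proof. split; [exact: leqs_refl | exact: leqs_sym | exact: leqs_trans]. Qed.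
#[global] Instance ladd_proper : Proper (respectful (@leqs F) (respectful (@leqs F) (@leqs F))) ladd.
Proof. move=> ? ? h1 ? ? h2; exact: ladd_ext. Qed.
#[global] Instance lmul_proper : Proper (respectful (@leqs F) (respectful (@leqs F) (@leqs F))) (@lmul F).
Proof. move=> ? ? h1 ? ? h2; exact: lmul_ext. Qed.
#[global] Instance lsub_proper : Proper (respectful (@leqs F) (respectful (@leqs F) (@leqs F))) (@lsub F).
Proof. move=> ? ? h1 ? ? h2; exact: lsub_ext. Qed.
#[global] Instance lopp_proper : Proper (respectful (@leqs F) (@leqs F)) lopp.
Proof. move=> ? ? h1; exact: lopp_ext. Qed.

Lemma lpolyD (p q : {poly F}) : leqs (lpoly (p + q)) (ladd (lpoly p) (lpoly q)).
Proof. move=> d; rewrite lcoef_ladd !lcoef_lpoly coefD; by case: ifP; rewrite ?addr0. Qed.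
Lemma lpolyB (p q : {poly F}) : leqs (lpoly (p - q)) (lsub (lpoly p) (lpoly q)).
Proof. move=> d; rewrite lcoef_lsub !lcoef_lpoly coefB; by case: ifP; rewrite ?subr0. Qed.
Lemma lpoly0 : leqs (lpoly 0) lz.
Proof. move=> d; rewrite lcoef_lz lcoef_lpoly coef0; by case: ifP. Qed.
Lemma lpolyM (p q : {poly F}) : leqs (lpoly (p * q)) (lmul (lpoly p) (lpoly q)).
Proof.
move=> d; rewrite lcoef_lpoly; case: ifP => hd.
  rewrite (@lmul_win _ _ _ d (absz d).+1); last first.
    move=> j hj; rewrite /cg !lcoef_lpoly; case: ifP => h1; last by rewrite mul0r.
    case: ifP => h2; last by rewrite mulr0.
    lia.
  rewrite coefMr /isum; apply: eq_bigr => i _.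
  have hi := ltn_ord i.
  rewrite /cg !lcoef_lpoly.
  have -> : ((0:int) <= d - i%:Z) = true by apply/idP; lia.
  have -> : ((0:int) <= d - (d - i%:Z)) = true by apply/idP; lia.
  congr (p`_ _ * q`_ _); lia.
rewrite (@lmul_win _ _ _ (-1) 0); first by rewrite /isum big_ord0.
move=> j hj; rewrite /cg !lcoef_lpoly; case: ifP => h1; last by rewrite mul0r.
case: ifP => h2; last by rewrite mulr0.
lia.
Qed.

Definition lzero s := forall d, lcoef s d = 0.
Definition above s (a : int) := forall d, a < d -> lcoef s d = 0.

Lemma lead_above s L : is_lead s L -> above s L.
Proof. by case. Qed.

Lemma lead_exists s : ~ lzero s -> exists L, is_lead s L.
Proof.
move=> hnz.
have [d0 hd0] : exists d0, lcoef s d0 != 0.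
  apply: NNPP => h; apply: hnz => d; apply: NNPP => h1; apply: h; exists d; exact/eqP.
have hle : d0 <= ltop s.
  rewrite leNgt; apply/negP => h; move: hd0; by rewrite lcoef_gt // eqxx.
have hex : exists i : nat, lcoef s (ltop s - i%:Z) != 0.
  exists (absz (ltop s - d0)); have -> : ltop s - (absz (ltop s - d0))%:Z = d0 by lia.
  done.
case: (ex_minnP hex) => i0 hi0 hmin.
exists (ltop s - i0%:Z); split => // d hd.
case: (boolP (d <= ltop s)) => hds; last by rewrite lcoef_gt // ltNge.
have -> : d = ltop s - (absz (ltop s - d))%:Z by lia.
apply/eqP; apply: contraT => hne.
have := hmin _ hne; lia.
Qed.

Lemma lead_uniq s L1 L2 : is_lead s L1 -> is_lead s L2 -> L1 = L2.
Proof.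
move=> [h1 h1'] [h2 h2']; apply/eqP; rewrite eq_le !leNgt; apply/andP; split; apply/negP => h.
- by move: h1; rewrite h2' // eqxx.
- by move: h2; rewrite h1' // eqxx.
Qed.

Lemma lead_leqs s t L : leqs s t -> is_lead s L -> is_lead t L.
Proof. by move=> h [h1 h2]; split; [rewrite -h | move=> d hd; rewrite -h h2]. Qed.

Lemma above_mul s t a b : above s a -> above t b -> above (lmul s t) (a + b).
Proof.
move=> hs ht d hd; rewrite (@lmul_win _ _ _ a 0) ?/isum ?big_ord0 // => j hj; rewrite /cg.
case: (boolP (a < j)) => h; first by rewrite hs ?mul0r.
by rewrite ht ?mulr0 //; lia.
Qed.

Lemma lmul_lead s t L1 L2 : is_lead s L1 -> is_lead t L2 -> is_lead (lmul s t) (L1 + L2).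
Proof.
move=> hs ht; split; last by apply: above_mul; apply: lead_above.
rewrite (@lmul_win _ _ _ L1 1).
  rewrite /isum big_ord1 /cg subr0 (_ : L1 + L2 - L1 = L2); last by lia.
  by rewrite mulf_neq0 //; [case: hs | case: ht].
move=> j [hj|hj]; rewrite /cg.
  by rewrite (lead_above ht) ?mulr0 //; lia.
by rewrite (lead_above hs) ?mul0r.
Qed.

Lemma lmul_zero s t : lzero t -> lzero (lmul s t).
Proof.
move=> ht d; rewrite (@lmul_win _ _ _ 0 0) ?/isum ?big_ord0 // => j _.
by rewrite /cg ht mulr0.
Qed.

Lemma lead_nz s L : is_lead s L -> ~ lzero s.
Proof. by move=> [h _] hz; move: h; rewrite hz eqxx. Qed.

Lemma lead_div s t u Lt Lu : leqs (lmul s t) u -> is_lead t Lt -> is_lead u Lu ->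
  is_lead s (Lu - Lt).
Proof.
move=> h ht hu.
have hnz : ~ lzero s.
  move=> hz; apply: (lead_nz hu) => d; rewrite -h.
  have hc : leqs (lmul s t) (lmul t s) by apply: lmulC.
  by rewrite hc; apply: lmul_zero.
have [Ls hLs] := lead_exists hnz.
have := lead_leqs h (lmul_lead hLs ht) => hu'.
have <- := lead_uniq hu' hu; by rewrite addrK.
Qed.

Lemma lead_lone : is_lead (lone F) 0.
Proof.
split; first by rewrite lcoef_lone eqxx oner_neq0.
by move=> d hd; rewrite lcoef_lone; case: (d =P 0) => // hd0; move: hd; rewrite hd0 ltxx.
Qed.

Lemma lead_lopp s L : is_lead s L -> is_lead (lopp s) L.
Proof.
by move=> [h1 h2]; split; [rewrite lcoef_lopp oppr_eq0 | move=> d hd; rewrite lcoef_lopp h2 ?oppr0].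
Qed.

Lemma lead_lpoly (p : {poly F}) : p != 0 -> is_lead (lpoly p) (size p).-1%:Z.
Proof.
move=> hp; split.
  have h0 : ((0:int) <= (size p).-1%:Z) by []. rewrite lcoef_lpoly h0.
  by rewrite absz_nat -lead_coefE lead_coef_eq0.
move=> d hd; rewrite lcoef_lpoly; case: ifP => // h.
rewrite nth_default //.
have : (size p).-1%:Z < d := hd.
move: (size p) => n; lia.
Qed.

Lemma above_lpoly (p : {poly F}) (a : int) : (size p).-1%:Z <= a -> above (lpoly p) a.
Proof.
move=> ha d hd; rewrite lcoef_lpoly; case: ifP => // h.
rewrite nth_default //.
have : (size p).-1%:Z < d by apply: le_lt_trans hd.
move: (size p) => n; lia.
Qed.

End IS.



Section CF.
Variable F : fieldType.
Add Ring lring : (@lring_theory F) (setoid (@leqs_setoid F) (@lring_ext F)).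
Implicit Types (s t u : lser F) (d : int).

Lemma lfloor_coef s (i : nat) : (lfloor s)`_i = if (i <= absz (ltop s))%N then lcoef s i%:Z else 0.
Proof. by rewrite /lfloor coef_poly ltnS. Qed.

Lemma lfloor_frac s d : (0:int) <= d -> lcoef (lsub s (lpoly (lfloor s))) d = 0.
Proof.
move=> hd; rewrite lcoef_lsub lcoef_lpoly hd lfloor_coef.
case: ifP => h.
  by rewrite (_ : (absz d)%:Z = d) ?subrr //; lia.
rewrite lcoef_gt ?subr0 //.
have : ~~ (absz d <= absz (ltop s))%N by rewrite h.
lia.
Qed.

Lemma size_eq_coef (p : {poly F}) n : p`_n != 0 -> (forall j, (n < j)%N -> p`_j = 0) ->
  size p = n.+1.
Proof.
move=> h1 h2; apply/eqP; rewrite eqn_leq; apply/andP; split.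
  by apply/leq_sizeP => j hj; apply: h2.
by rewrite ltnNge; apply/negP => hs; move: h1; rewrite nth_default // eqxx.
Qed.

Lemma lfloor_size s L : is_lead s L -> (0:int) <= L -> size (lfloor s) = (absz L).+1.
Proof.
move=> [h1 h2] hL.
have hLt : L <= ltop s by rewrite leNgt; apply/negP => h; move: h1; rewrite lcoef_gt // eqxx.
apply: size_eq_coef.
  rewrite lfloor_coef ifT; last by lia.
  by rewrite (_ : (absz L)%:Z = L) //; lia.
move=> j hj; rewrite lfloor_coef; case: ifP => // _; apply: h2; lia.
Qed.

Lemma nz_of_lone s t : leqs (lmul s t) (lone F) -> ~ lzero s /\ ~ lzero t.
Proof.
move=> h; split => hz.
  apply: (lead_nz (lead_lone F)) => d; rewrite -h.
  have hc : leqs (lmul s t) (lmul t s) by apply: lmulC.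
  by rewrite hc; apply: lmul_zero.
by apply: (lead_nz (lead_lone F)) => d; rewrite -h; apply: lmul_zero.
Qed.

Lemma lpoly_inj (p q : {poly F}) : leqs (lpoly p) (lpoly q) -> p = q.
Proof.
move=> h; apply/polyP => i.
have h0 : ((0:int) <= i%:Z) by [].
by have := h i%:Z; rewrite !lcoef_lpoly h0 absz_nat.
Qed.

Lemma lpolyN (p : {poly F}) : leqs (lpoly (- p)) (lopp (lpoly p)).
Proof. by move=> d; rewrite lcoef_lopp !lcoef_lpoly coefN; case: ((0:int) <= d); rewrite ?oppr0. Qed.

Ltac pid := apply: lpoly_inj; rewrite ?lpolyB ?lpolyM ?lpolyD ?lpolyN ?lpolyM ?lpolyD ?lpolyB ?lpolyN ?lpolyM; ring.

Lemma id_a (dl q p P1 Q1 Qm : {poly F}) :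
  (- dl * (q * P1 - p * Q1)) * Qm = - dl * (q * P1 * Qm - (p * Qm) * Q1).
Proof. pid. Qed.
Lemma id_b (q Pm Qm P1 Q1 : {poly F}) :
  - (Pm * Q1 - P1 * Qm) * (q * P1 * Qm - (q * Pm) * Q1) = (Pm * Q1 - P1 * Qm) * (Pm * Q1 - P1 * Qm) * q.
Proof. pid. Qed.
Lemma id_c (dl q p P1 Q1 Pm : {poly F}) :
  (- dl * (q * P1 - p * Q1)) * Pm = - dl * ((q * Pm) * P1 - p * Q1 * Pm).
Proof. pid. Qed.
Lemma id_d (p Pm Qm P1 Q1 : {poly F}) :
  - (Pm * Q1 - P1 * Qm) * ((p * Qm) * P1 - p * Q1 * Pm) = (Pm * Q1 - P1 * Qm) * (Pm * Q1 - P1 * Qm) * p.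
Proof. pid. Qed.
Lemma id_e (P Q P' Q' A : {poly F}) :
  P * (A * Q + Q') - (A * P + P') * Q = - (P' * Q - P * Q').
Proof. pid. Qed.

Variables (be : lser F) (bs : nat -> lser F).
Hypothesis hcf : is_cf_seq be bs.

Let a i := lfloor (bs i).
Definition ePQ (x : {poly F} * {poly F}) := lsub (lmul be (lpoly x.2)) (lpoly x.1).
Let ell i := (size (a i)).-1.

Lemma bs_lead i : is_lead (bs i.+1) (ell i.+1)%:Z /\ (1 < size (a i.+1))%N.
Proof.
have h := hcf.2 i.
have [hz1 hz2] := nz_of_lone h.
have [Lb hb] := lead_exists hz1.
have [Lf hf] := lead_exists hz2.
have hsum : Lb + Lf = 0.
  by apply: lead_uniq (lead_leqs h (lmul_lead hb hf)) (lead_lone F).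
have hLf : Lf < 0.
  rewrite ltNge; apply/negP => h0; case: hf => hf _; move: hf.
  by rewrite lfloor_frac // eqxx.
have hs := lfloor_size hb (_ : (0:int) <= Lb).
rewrite /ell /a hs; last by lia.
split; last by lia.
by rewrite /= (_ : (absz Lb)%:Z = Lb) //; lia.
Qed.

Lemma cfpqS n : cfpq a n.+1 = ((cfpq a n).2,
   (a n.+1 * (cfpq a n).2.1 + (cfpq a n).1.1, a n.+1 * (cfpq a n).2.2 + (cfpq a n).1.2)).
Proof. by rewrite /=; case: (cfpq a n) => [[? ?] [? ?]]. Qed.

Let Q n := (cfpq a n).2.2.
Let Q' n := (cfpq a n).1.2.
Let P n := (cfpq a n).2.1.
Let P' n := (cfpq a n).1.1.
Let dq n := (size (Q n)).-1.

Lemma size_Q n : (size (Q' n) < size (Q n))%N /\ size (Q n.+1) = (size (Q n) + ell n.+1)%N.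
Proof.
have step : forall n, (size (Q' n) < size (Q n))%N ->
    size (Q n.+1) = (size (Q n) + ell n.+1)%N.
  move=> m hm; rewrite /Q cfpqS /= -/(Q m) -/(Q' m).
  have [_ ha] := bs_lead m.
  have hQ : Q m != 0 by rewrite -size_poly_gt0; lia.
  have ha0 : a m.+1 != 0 by rewrite -size_poly_gt0; lia.
  rewrite size_polyDl size_mul // /ell; set x := size (a m.+1) in ha *; set y := size (Q m) in hm *; set z := size (Q' m) in hm *; lia.
elim: n => [|n [IH1 IH2]].
  split; first by rewrite /Q /Q' /= size_poly0 size_poly1.
  by apply: step; rewrite /Q /Q' /= size_poly0 size_poly1.
have h1 : (size (Q' n.+1) < size (Q n.+1))%N.
  rewrite IH2 /Q' cfpqS /= -/(Q n).
  have [_ ha] := bs_lead n; rewrite /ell; lia.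
by split => //; apply: step.
Qed.

Lemma Q_nz n : Q n != 0.
Proof. have [h _] := size_Q n; rewrite -size_poly_gt0; lia. Qed.

Lemma dq0 : dq 0 = 0%N.
Proof. by rewrite /dq /Q /= size_poly1. Qed.

Lemma dqS n : dq n.+1 = (dq n + ell n.+1)%N.
Proof.
have [h1 h2] := size_Q n; rewrite /dq h2.
have [_ ha] := bs_lead n; rewrite /ell; lia.
Qed.

Lemma dq_lt n : (dq n < dq n.+1)%N.
Proof. rewrite dqS; have [_ ha] := bs_lead n; rewrite /ell; lia. Qed.

Lemma det n : P' n * Q n - P n * Q' n = (-1) ^+ n.
Proof.
elim: n => [|n IH]; first by rewrite /P' /Q /P /Q' /= mulr1 mulr0 subr0.
rewrite /P' /Q /P /Q' cfpqS /= -/(P n) -/(Q n) -/(P' n) -/(Q' n) exprS -IH mulN1r.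
exact: id_e.
Qed.

Lemma C_rel n : leqs (lmul (ePQ (cfpq a n).2) (bs n.+1)) (lopp (ePQ (cfpq a n).1)).
Proof.
elim: n => [|n IH].
  rewrite /ePQ /= lpoly0.
  have h0 := hcf.2 0%N; have h1 := hcf.1.
  change (lpoly 1) with (lone F).
  rewrite -h1.
  transitivity (lmul (bs 1) (lsub (bs 0) (lpoly (a 0)))); first by rewrite /a; ring.
  rewrite h0; ring.
have R : leqs (ePQ (cfpq a n.+1).2)
   (ladd (lmul (lpoly (a n.+1)) (ePQ (cfpq a n).2)) (ePQ (cfpq a n).1)).
  rewrite cfpqS /ePQ; cbn [fst snd]; rewrite !lpolyD !lpolyM.
  set A := lpoly (a n.+1); set B := lpoly (cfpq a n).2.2; set C := lpoly (cfpq a n).1.2; set D := lpoly (cfpq a n).2.1; set E := lpoly (cfpq a n).1.1. ring.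
have E' : leqs (ePQ (cfpq a n).1) (lopp (lmul (ePQ (cfpq a n).2) (bs n.+1))).
  rewrite IH; ring.
have H := hcf.2 n.+1.
rewrite R E' {1}cfpqS /=.
transitivity (lmul (lopp (ePQ (cfpq a n).2)) (lmul (bs n.+2) (lsub (bs n.+1) (lpoly (a n.+1)))));
  first by ring.
rewrite H; ring.
Qed.

Lemma e_lead n : is_lead (ePQ (cfpq a n).2) (- (dq n.+1)%:Z).
Proof.
elim: n => [|n IH].
  have h := C_rel 0.
  have hu : is_lead (lopp (ePQ (cfpq a 0).1)) 0.
    have hm : leqs (ePQ (cfpq a 0).1) (lopp (lone F)).
      rewrite /ePQ /= lpoly0; change (lpoly 1) with (lone F); ring.
    apply: lead_lopp; apply: (lead_leqs (leqs_sym hm) (lead_lopp (lead_lone F))).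
  have := lead_div h (bs_lead 0).1 hu.
  by rewrite dqS dq0 add0n sub0r.
have h := C_rel n.+1.
have hu : is_lead (lopp (ePQ (cfpq a n.+1).1)) (- (dq n.+1)%:Z).
  by rewrite cfpqS /=; apply: lead_lopp.
have := lead_div h (bs_lead n.+1).1 hu.
rewrite (dqS n.+1) (_ : - (dq n.+1)%:Z - (ell n.+2)%:Z = - (dq n.+1 + ell n.+2)%N%:Z) //.
lia.
Qed.

Lemma lcoef_lpoly_nat (p : {poly F}) (i : nat) : lcoef (lpoly p) i%:Z = p`_i.
Proof. have h0 : ((0:int) <= i%:Z) by []. by rewrite lcoef_lpoly h0 absz_nat. Qed.

Definition approx (p q : {poly F}) (X : int) :=
  forall d, - X < d -> lcoef (lmul be (lpoly q)) d = lcoef (lpoly p) d.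

Lemma approx_above p q X : approx p q X <-> above (lsub (lmul be (lpoly q)) (lpoly p)) (- X).
Proof.
split=> h d hd.
  by rewrite lcoef_lsub h // subrr.
by apply/eqP; rewrite -subr_eq0 -lcoef_lsub; apply/eqP; apply: h.
Qed.

Lemma approx_PQ n : approx (P n) (Q n) (dq n.+1)%:Z.
Proof. by apply/approx_above; apply: lead_above (e_lead n). Qed.

Lemma delta m : P m * Q m.+1 - P m.+1 * Q m = (-1) ^+ m.+1.
Proof. by have := det m.+1; rewrite /P' /Q /P /Q' cfpqS. Qed.

Lemma BA (Dg m : nat) (p q : {poly F}) : q != 0 -> (size q <= Dg.+1)%N ->
  approx p q Dg.+1%:Z -> (dq m <= Dg)%N -> (Dg < dq m.+1)%N ->
  exists h, h != 0 /\ p = h * P m /\ q = h * Q m.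
Proof.
move=> hq hsq hap h1 h2.
have e1 : p * Q m = q * P m.
  apply/eqP; rewrite -subr_eq0; apply/eqP.
  have hs : leqs (lpoly (p * Q m - q * P m))
     (lsub (lmul (lpoly q) (ePQ (cfpq a m).2)) (lmul (lpoly (Q m)) (lsub (lmul be (lpoly q)) (lpoly p)))).
    rewrite /ePQ lpolyB !lpolyM; cbn [fst snd].
    set A := lpoly p; set B := lpoly q; set C := lpoly (Q m); set D := lpoly (P m); set E := lpoly (cfpq a m).2.2; set G := lpoly (cfpq a m).2.1.
    rewrite /C /D /E /G /Q /P; clear.
    set C := lpoly _; set D := lpoly _; ring.
  apply/polyP => i; rewrite coef0.
  have := hs i%:Z; rewrite lcoef_lpoly_nat => ->.
  rewrite lcoef_lsub.
  have ha1 : above (lmul (lpoly q) (ePQ (cfpq a m).2)) (Dg%:Z + - (dq m.+1)%:Z).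
    apply: above_mul; last by apply: lead_above (e_lead m).
    apply: above_lpoly; lia.
  have ha2 : above (lmul (lpoly (Q m)) (lsub (lmul be (lpoly q)) (lpoly p))) ((dq m)%:Z + - (Dg.+1)%:Z).
    apply: above_mul; last by apply/approx_above.
    by apply: above_lpoly.
  by rewrite ha1 ?ha2 ?subr0 //; lia.
pose dl := P m * Q m.+1 - P m.+1 * Q m.
have hd2 : dl * dl = 1 by rewrite /dl delta -exprMn mulrNN mulr1 expr1n.
pose h := - dl * (q * P m.+1 - p * Q m.+1).
have eQ : h * Q m = q.
  transitivity (- dl * (q * P m.+1 * Q m - (p * Q m) * Q m.+1)); first by rewrite /h id_a.
  rewrite e1; transitivity ((dl * dl) * q); last by rewrite hd2 mul1r.
  by rewrite /dl id_b.
have eP : h * P m = p.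
  transitivity (- dl * ((q * P m) * P m.+1 - p * Q m.+1 * P m)); first by rewrite /h id_c.
  rewrite -e1; transitivity ((dl * dl) * p); last by rewrite hd2 mul1r.
  by rewrite /dl id_d.
exists h; split; last by [].
by apply: contraNneq hq => h0; rewrite -eQ h0 mul0r.
Qed.

Lemma approx_bound m (h : {poly F}) (X : int) : h != 0 ->
  approx (h * P m) (h * Q m) X -> X <= (dq m.+1)%:Z - (size h).-1%:Z.
Proof.
move=> hh hap; rewrite leNgt; apply/negP => hX.
have hs : leqs (lsub (lmul be (lpoly (h * Q m))) (lpoly (h * P m)))
   (lmul (lpoly h) (ePQ (cfpq a m).2)).
  rewrite /ePQ !lpolyM; cbn [fst snd].
  set A := lpoly h; rewrite /Q /P; set C := lpoly _; set D := lpoly _; ring.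
have hl := lead_leqs (leqs_sym hs) (lmul_lead (lead_lpoly hh) (e_lead m)).
case: hl => hl _; move: hl.
rewrite (proj1 (approx_above _ _ _) hap) ?eqxx //; lia.
Qed.

End CF.



Section NatIdx.
Variable f : nat -> nat.
Hypothesis f0 : f 0 = 0%N.
Hypothesis flt : forall n, (f n < f n.+1)%N.

Lemma f_ltn i j : (i < j)%N -> (f i < f j)%N.
Proof.
elim: j => // j IH; rewrite ltnS leq_eqVlt => /orP [/eqP ->|h]; first exact: flt.
exact: ltn_trans (IH h) (flt j).
Qed.

Lemma f_leq i j : (i <= j)%N -> (f i <= f j)%N.
Proof. by rewrite leq_eqVlt => /orP [/eqP ->|h] //; apply: ltnW; apply: f_ltn. Qed.

Lemma f_ge n : (n <= f n)%N.
Proof. elim: n => // n IH; have := flt n; lia. Qed.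

Lemma idx_ex D : exists m, (f m <= D < f m.+1)%N.
Proof.
have hex : exists m, (D < f m.+1)%N by exists D; have := f_ge D.+1; lia.
case: (ex_minnP hex) => m hm hmin; exists m; rewrite hm andbT.
case: m hm hmin => [|m] hm hmin; first by rewrite f0.
by rewrite leqNgt; apply/negP => h; have := hmin _ h; lia.
Qed.

Lemma idx_uniq D m m' : (f m <= D < f m.+1)%N -> (f m' <= D < f m'.+1)%N -> m = m'.
Proof.
move=> /andP [h1 h2] /andP [h3 h4]; apply/eqP; rewrite eqn_leq; apply/andP; split;
  rewrite leqNgt; apply/negP => h.
- have := f_leq h; lia.
- have := f_leq h; lia.
Qed.
End NatIdx.

Section DV.
Variables (K k : fieldType) (D : dvr K k).
Local Notation v := (Defs.val D).
Local Notation O := (inO D).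
Local Notation rd := (red D).

Lemma val1 : v 1 = 0.
Proof. have := Defs.valM D (oner_neq0 K) (oner_neq0 K); rewrite mulr1; set x := v 1; lia. Qed.

Lemma valN1 : v (-1) = 0.
Proof.
have h1 : (-1 : K) != 0 by rewrite oppr_eq0 oner_neq0.
have := Defs.valM D h1 h1; rewrite mulrNN mulr1 val1 => h; lia.
Qed.

Lemma inO0 : O 0. Proof. by rewrite /inO eqxx. Qed.
Lemma inO1 : O 1. Proof. by rewrite /inO val1 lexx orbT. Qed.

Lemma inOD x y : O x -> O y -> O (x + y).
Proof.
have [->|hx] := eqVneq x 0; first by rewrite add0r.
have [->|hy] := eqVneq y 0; first by rewrite addr0.
rewrite /inO (negbTE hx) (negbTE hy) /= => h1 h2.
have [//|hxy] := eqVneq (x + y) 0; rewrite /=.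
have := Defs.valD D hx hy hxy.
move: h1 h2; set a := v x; set b := v y; set c := v (x + y); lia.
Qed.

Lemma inOM x y : O x -> O y -> O (x * y).
Proof.
have [->|hx] := eqVneq x 0; first by rewrite mul0r.
have [->|hy] := eqVneq y 0; first by rewrite mulr0.
rewrite /inO (negbTE hx) (negbTE hy) /= => h1 h2.
rewrite Defs.valM // (negbTE (mulf_neq0 hx hy)) /=; lia.
Qed.

Lemma inON x : O x -> O (- x).
Proof. by move=> h; rewrite -mulN1r; apply: inOM => //; rewrite /inO valN1 lexx orbT. Qed.

Lemma inO_sum I (r : seq I) (P : pred I) (F : I -> K) :
  (forall i, P i -> O (F i)) -> O (\sum_(i <- r | P i) F i).
Proof. move=> h; apply: (big_ind (fun x => O x)) => //; [exact: inO0 | exact: inOD]. Qed.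

Lemma red0 : rd 0 = 0.
Proof. have := @Defs.redD _ _ D 0 0 inO0 inO0; rewrite addr0 => h; apply/eqP; rewrite -(subrr (rd 0)); rewrite {2}h; by rewrite addrK. Qed.

Lemma red_sum I (r : seq I) (P : pred I) (F : I -> K) :
  (forall i, P i -> O (F i)) -> rd (\sum_(i <- r | P i) F i) = \sum_(i <- r | P i) rd (F i).
Proof.
move=> h.
pose R (x : K) (y : k) := O x /\ rd x = y.
have : R (\sum_(i <- r | P i) F i) (\sum_(i <- r | P i) rd (F i)).
  apply: (big_ind2 R); first by split; [exact: inO0 | exact: red0].
    by move=> x1 x2 y1 y2 [hx1 hx2] [hy1 hy2]; split; [exact: inOD | rewrite Defs.redD // hx2 hy2].
  by move=> i hi; split; [exact: h|].
by case.
Qed.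

Lemma val_exp (x : K) (n : nat) : x != 0 -> v (x ^+ n) = (n%:Z * v x).
Proof.
move=> hx; elim: n => [|n IH]; first by rewrite expr0 val1 mul0r.
rewrite exprS Defs.valM ?expf_neq0 // IH; lia.
Qed.

Lemma val_inv (x : K) : x != 0 -> v (x^-1) = - v x.
Proof.
move=> hx; have := Defs.valM D hx (invr_neq0 hx); rewrite mulfV // val1 => h; lia.
Qed.

Lemma upi_exp (z : int) : (upi D ^ z != 0) /\ v (upi D ^ z) = z.
Proof.
have hu := upi_neq0 D.
case: z => n.
  by rewrite expfz_neq0 // /exprz val_exp // val_upi mulr1.
split; first by rewrite expfz_neq0.
rewrite /exprz val_inv ?expf_neq0 // val_exp // val_upi; lia.
Qed.

Lemma bigmin_le (r : seq K) (x0 : int) c : c \in r -> c != 0 ->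
  \big[Num.min/x0]_(c <- r | c != 0) v c <= v c.
Proof.
elim: r => // c0 r IH; rewrite inE big_cons => /orP [/eqP ->|hc] hc0.
  rewrite hc0; set b := \big[_/_]_(_ <- _ | _) _; lia.
have := IH hc hc0; case: ifP => _; set b := \big[_/_]_(_ <- _ | _) _; lia.
Qed.

Lemma bigmin_att (r : seq K) (x0 : int) :
  (\big[Num.min/x0]_(c <- r | c != 0) v c) = x0 \/
  exists c, [/\ c \in r, c != 0 & (\big[Num.min/x0]_(c <- r | c != 0) v c) = v c].
Proof.
elim: r => [|c0 r IH] /=; first by rewrite big_nil; left.
rewrite big_cons; case: ifP => hc0; last first.
  case: IH => [->|[c [h1 h2 h3]]]; [by left | right; exists c; split; [by rewrite inE h1 orbT | exact: h2 | exact: h3]].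
move: IH; set b := \big[_/_]_(_ <- _ | _) _ => IH.
have [h|h] : Num.min (v c0) b = v c0 \/ Num.min (v c0) b = b by lia.
  by right; exists c0; split => //; rewrite inE eqxx.
rewrite h; case: IH => [->|[c [h1 h2 h3]]]; [by left | right; exists c; split; [by rewrite inE h1 orbT | exact: h2 | exact: h3]].
Qed.

Lemma gauss_le (q : {poly K}) i : q`_i != 0 -> gaussv D q <= v q`_i.
Proof.
move=> hi; apply: bigmin_le => //; apply: mem_nth.
by rewrite ltnNge; apply/negP => h; move: hi; rewrite nth_default // eqxx.
Qed.

Lemma gauss_att (q : {poly K}) : q != 0 -> exists i, q`_i != 0 /\ v q`_i = gaussv D q.
Proof.
move=> hq.
have hl : lead_coef q \in (q : seq K).
  by rewrite lead_coefE mem_nth // prednK // size_poly_gt0.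
have [c [hc hc0 hb]] : exists c, [/\ c \in (q : seq K), c != 0 & gaussv D q = v c].
  case: (bigmin_att q (v (lead_coef q))) => [h|h]; last by [].
  by exists (lead_coef q); split => //; rewrite lead_coef_eq0.
have [i hi hci] := nthP 0 hc; rewrite -hci in hc0 hb.
by exists i; split => //; rewrite hb.
Qed.

Lemma scaled_int (q : {poly K}) i : O ((upi D ^ (- gaussv D q)) *: q)`_i.
Proof.
rewrite coefZ; have [s0 hs] := upi_exp (- gaussv D q).
have [->|hi] := eqVneq q`_i 0; first by rewrite mulr0 inO0.
rewrite /inO Defs.valM // hs (negbTE (mulf_neq0 s0 hi)) /=.
have := gauss_le hi; set g := gaussv D q; set w := v q`_i; lia.
Qed.

Lemma scaled_unit (q : {poly K}) : q != 0 ->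
  exists i, rd ((upi D ^ (- gaussv D q)) *: q)`_i != 0.
Proof.
move=> hq; have [i [hi hv]] := gauss_att hq; exists i.
rewrite coefZ; have [s0 hs] := upi_exp (- gaussv D q).
rewrite Defs.red_eq0; last by have := scaled_int q i; rewrite coefZ /inO.
rewrite (negbTE (mulf_neq0 s0 hi)) Defs.valM // hs hv /=; set g := gaussv D q; lia.
Qed.
End DV.



Section Sc.
Variable F : fieldType.
Lemma approx_scale (be : lser F) (p q : {poly F}) (c : F) X :
  approx be p q X -> approx be (c *: p) (c *: q) X.
Proof.
move=> h d hd.
have hs : (size (c *: q) <= size q)%N := size_scale_leq c q.
pose N := (absz (ltop be + (size q)%:Z - d)%R).+1.
rewrite (@lmul_win' _ be _ d (ltop be) N) //; last by rewrite /N /=; set z := size (c *: q) in hs *; set y := size q in hs *; lia.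
have e : lcoef (lpoly (c *: p)) d = c * lcoef (lpoly p) d.
  rewrite !lcoef_lpoly coefZ; by case: ((0:int) <= d); rewrite ?mulr0.
rewrite e -h // (@lmul_win' _ be _ d (ltop be) N) //; last by rewrite /N /=; set y := size q; lia.
rewrite /isum mulr_sumr; apply: eq_bigr => i _.
by rewrite /cg !lcoef_lpoly coefZ; case: ((0:int) <= _); rewrite ?mulr0 // mulrCA.
Qed.

Lemma approx_mono (be : lser F) (p q : {poly F}) X X' : X' <= X ->
  approx be p q X -> approx be p q X'.
Proof. by move=> hX h d hd; apply: h; lia. Qed.
End Sc.

Section Red.
Variables (K k : fieldType) (D : dvr K k).
Local Notation O := (inO D).
Local Notation rd := (red D).

Lemma lcoef_lmap (s : lser K) d : lcoef (lmap rd s) d = rd (lcoef s d).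
Proof. by rewrite /lcoef /=; case: ifP; rewrite ?red0. Qed.

Lemma lcoef_lpoly_map (p : {poly K}) d :
  lcoef (lpoly (map_poly rd p)) d = rd (lcoef (lpoly p) d).
Proof.
by rewrite !lcoef_lpoly; case: ((0:int) <= d); rewrite ?red0 // coef_map_id0 // red0.
Qed.

Lemma lpoly_int (p : {poly K}) d : (forall i, O p`_i) -> O (lcoef (lpoly p) d).
Proof. by move=> h; rewrite lcoef_lpoly; case: ((0:int) <= d); rewrite ?inO0. Qed.

Lemma lmul_int (s : lser K) (p : {poly K}) d : (forall j, O (lcoef s j)) ->
  (forall i, O p`_i) -> O (lcoef (lmul s (lpoly p)) d).
Proof.
move=> hs hp; rewrite lmul_std /isum; apply: inO_sum => i _.
by apply: inOM; [apply: hs | apply: lpoly_int].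
Qed.

Lemma size_map_red (p : {poly K}) : (size (map_poly rd p) <= size p)%N.
Proof. by rewrite /map_poly; apply: size_poly. Qed.

Lemma red_lmul (s : lser K) (p : {poly K}) d : (forall j, O (lcoef s j)) ->
  (forall i, O p`_i) ->
  lcoef (lmul (lmap rd s) (lpoly (map_poly rd p))) d = rd (lcoef (lmul s (lpoly p)) d).
Proof.
move=> hs hp.
have hsz := size_map_red p.
pose N := (absz (ltop s + (size p)%:Z - d)%R).+1.
rewrite (@lmul_win' _ s _ d (ltop s) N) //; last by rewrite /N /=; set y := size p; lia.
rewrite (@lmul_win' _ (lmap rd s) _ d (ltop s) N) //; last first.
  by rewrite /N /=; set y := size p in hsz *; set z := size (map_poly _ _) in hsz *; lia.
rewrite /isum red_sum; last by move=> i _; apply: inOM; [apply: hs | apply: lpoly_int].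
apply: eq_bigr => i _; rewrite /cg lcoef_lmap lcoef_lpoly_map Defs.redM //.
  exact: hs.
exact: lpoly_int.
Qed.

Lemma P_int (al : lser K) (P Q : {poly K}) X : (forall j, O (lcoef al j)) ->
  (forall i, O Q`_i) -> approx al P Q X -> 0 < X -> forall i, O P`_i.
Proof.
move=> ha hq hap hX i.
rewrite -lcoef_lpoly_nat -hap; last by lia.
exact: lmul_int.
Qed.

Lemma approx_red (al : lser K) (P Q : {poly K}) X : (forall j, O (lcoef al j)) ->
  (forall i, O Q`_i) -> (forall i, O P`_i) -> approx al P Q X ->
  approx (lmap rd al) (map_poly rd P) (map_poly rd Q) X.
Proof.
move=> ha hq hp hap d hd.
by rewrite red_lmul // hap // lcoef_lpoly_map.
Qed.
End Red.

Unset Implicit Arguments.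

Theorem mainTheorem4 (K k : fieldType) (D : dvr K k)
  (char_k_neq2 : (2%:R : k) != 0)
  (al : lser K) (als : nat -> lser K) (gs : nat -> lser k) :
  (forall d, inO D (lcoef al d)) ->
  (exists N : int, is_lead al N /\ unitO D (lcoef al N) /\ - N <= 0) ->
  ~ is_rat_ls al ->
  ~ is_rat_ls (lmap (red D) al) ->
  is_cf_seq al als ->
  is_cf_seq (lmap (red D) al) gs ->
  let gam := lmap (red D) al in
  let p := cfp (fun i => lfloor (als i)) in
  let q := cfq (fun i => lfloor (als i)) in
  let u := cfp (fun i => lfloor (gs i)) in
  let v := cfq (fun i => lfloor (gs i)) in
  let s := fun n => upi D ^ (- gaussv D (q n)) in
  let pt := fun n => map_poly (red D) (s n *: p n) in
  let qt := fun n => map_poly (red D) (s n *: q n) in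
  (forall n,
     (forall i, inO D (s n *: p n)`_i) /\ (forall i, inO D (s n *: q n)`_i) /\
     qt n != 0 /\
     ord_gt (lsub (lpoly (pt n)) (lmul gam (lpoly (qt n)))) (size (qt n)).-1%:Z) /\
  exists lam : nat -> nat,
    (forall n,
       (exists h : {poly k}, h != 0 /\ pt n = h * u (lam n) /\ qt n = h * v (lam n)) /\
       (forall m, (exists h : {poly k}, h != 0 /\ pt n = h * u m /\ qt n = h * v m) ->
                  m = lam n)) /\
    (forall n1 n2, (n1 <= n2)%N -> (lam n1 <= lam n2)%N) /\
    (forall m, exists n, lam n = m) /\
    (forall m n, lam n = m -> (forall n', lam n' = m -> (n <= n')%N) ->
       (size (v m)).-1 = (size (q n)).-1).
Proof.
move=> hint hlead hrat1 hrat2 hcfa hcfg gam p q u v s pt qt.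
pose dd n := (size (q n)).-1.
pose w m := (size (v m)).-1.
have hd0 : dd 0 = 0%N := dq0 als.
have hdlt : forall n, (dd n < dd n.+1)%N := dq_lt hcfa.
have hw0 : w 0 = 0%N := dq0 gs.
have hwlt : forall m, (w m < w m.+1)%N := dq_lt hcfg.
have hqnz : forall n, q n != 0 := Q_nz hcfa.
have hqint : forall n i, inO D (s n *: q n)`_i by move=> n i; apply: scaled_int.
have happ : forall n, approx al (s n *: p n) (s n *: q n) (dd n.+1)%:Z.
  by move=> n; apply: approx_scale; exact: (approx_PQ hcfa (n:=n)).
have hpint : forall n i, inO D (s n *: p n)`_i.
  move=> n; apply: (P_int hint (hqint n) (happ n)); have := hdlt n; lia.
have hqt : forall n, qt n != 0.
  move=> n; have [i hi] := scaled_unit D (hqnz n).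
  by apply/eqP => h0; move: hi; rewrite -coef_map_id0 ?red0 // -/(s n) -/(qt n) h0 coef0 eqxx.
have happt : forall n, approx gam (pt n) (qt n) (dd n.+1)%:Z.
  by move=> n; apply: approx_red.
have hszq : forall n, (size (qt n) <= (dd n).+1)%N.
  move=> n; have h1 := size_map_red D (s n *: q n).
  have h2 := size_scale_leq (s n) (q n).
  have h3 : (0 < size (q n))%N by rewrite size_poly_gt0.
  rewrite /dd prednK //; exact: leq_trans h1 h2.
split.
  move=> n; split; first exact: hpint.
  split; first exact: hqint.
  split; first exact: hqt.
  move=> d hd; rewrite lcoef_lsub (happt n d) ?subrr //.
  have := hszq n; have := hdlt n; move: hd; set z := size (qt n); lia.
have hidx : forall n, exists m, (w m <= dd n < w m.+1)%N := fun n => idx_ex hw0 hwlt (dd n).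
pose lam n := xchoose (hidx n).
have hl : forall n, (w (lam n) <= dd n < w (lam n).+1)%N := fun n => xchooseP (hidx n).
have hex : forall n, exists h, h != 0 /\ pt n = h * u (lam n) /\ qt n = h * v (lam n).
  move=> n; have /andP [h1 h2] := hl n.
  apply: (BA hcfg (hqt n) (hszq n)) => //.
  apply: approx_mono (happt n); have := hdlt n; lia.
have hbound : forall n m h, h != 0 -> pt n = h * u m -> qt n = h * v m ->
    ((size h).-1 + w m <= dd n)%N /\ ((dd n.+1)%:Z <= (w m.+1)%:Z - (size h).-1%:Z).
  move=> n m h hh ep eq; split.
    have hv : v m != 0 := Q_nz hcfg m.
    have := hszq n; rewrite eq size_mul //.
    have : (0 < size h)%N by rewrite size_poly_gt0.
    have : (0 < size (v m))%N by rewrite size_poly_gt0.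
    rewrite /w; set x := size h; set y := size (v m); lia.
  apply: (approx_bound hcfg hh).
  by rewrite -ep -eq; apply: happt.
have huniq : forall n m h, h != 0 -> pt n = h * u m -> qt n = h * v m -> m = lam n.
  move=> n m h hh ep eq; have [b1 b2] := hbound n m h hh ep eq.
  apply: (idx_uniq hw0 hwlt (D := dd n)) (hl n).
  apply/andP; split; first lia.
  have := hdlt n; move: b2; set x := (size h).-1; lia.
have hsurj : forall m, exists n, dd n = w m /\ lam n = m.
  move=> m; have [n /andP [hn1 hn2]] := idx_ex hd0 hdlt (w m).
  have hdn : dd n = w m.
    apply/eqP; rewrite eqn_leq hn1 /=; rewrite leqNgt; apply/negP => hlt.
    have /andP [l1 l2] := hl n.
    have hm : (lam n < m)%N.
      rewrite ltnNge; apply/negP => hle; have := f_leq hwlt hle; lia.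
    have [h [hh [ep eq]]] := hex n.
    have [_ b2] := hbound n (lam n) h hh ep eq.
    have := f_leq hwlt hm; move: b2; set x := (size h).-1; lia.
  exists n; split => //; symmetry; apply: (idx_uniq hw0 hwlt (D := dd n)) (hl n).
  by rewrite hdn leqnn /=.
exists lam; split.
  move=> n; split; first exact: hex.
  by move=> m [h [hh [ep eq]]]; apply: huniq ep eq.
split.
  move=> n1 n2 hn; rewrite leqNgt; apply/negP => hlt.
  have /andP [a1 a2] := hl n1; have /andP [a3 a4] := hl n2.
  have := f_leq hwlt hlt; have := f_leq hdlt hn; lia.
split.
  by move=> m; have [n [_ hn]] := hsurj m; exists n.
move=> m n hlm hmin.
have [n' [hn'1 hn'2]] := hsurj m.
have hle := hmin n' hn'2.
have := f_leq hdlt hle; have /andP [a1 a2] := hl n; rewrite hlm in a1 a2.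
rewrite -/(w m) -/(dd n); lia.
Qed.
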